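(* The maximal Lie algebra of point symmetries (maximal invariance algebra in the sense of Lie) of the partial differential equation $$u_t+(u_x+u_{xx})^2=0$$ for $u=u(t,x)$ is five-dimensional, with basis $$X_1=-\partial_x,\quad X_2=-e^{-x}\partial_u,\quad X_3=\partial_t,\quad X_4=\partial_u,\quad X_5=t\partial_t-u\partial_u,$$ whose only non-zero commutators are $[X_1,X_2]=X_2$, $[X_2,X_5]=-X_2$, $[X_3,X_5]=X_3$, $[X_4,X_5]=-X_4$. *)

(* Defs.v *)
From Stdlib Require Import Reals List.
From Coquelicot Require Import Coquelicot.
Open Scope R_scope.

(** Functions of the independent/dependent variables (t, x, u). *)
Definition fn3 := R -> R -> R -> R.

Definition d_t (f : fn3) : fn3 := fun t x u => Derive (fun s => f s x u) t.
Definition d_x (f : fn3) : fn3 := fun t x u => Derive (fun s => f t s u) x.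
Definition d_u (f : fn3) : fn3 := fun t x u => Derive (fun s => f t x s) u.

Definition pd (i : nat) : fn3 -> fn3 :=
  match i with 0 => d_t | 1 => d_x | _ => d_u end.

Fixpoint iterd (l : list nat) (f : fn3) : fn3 :=
  match l with nil => f | i :: l' => pd i (iterd l' f) end.

Definition unc3 (f : fn3) : R * R * R -> R :=
  fun p => f (fst (fst p)) (snd (fst p)) (snd p).

Definition smooth3 (f : fn3) : Prop :=
  forall (l : list nat) (t x u : R),
    continuous (unc3 (iterd l f)) (t, x, u) /\
    ex_derive (fun s => iterd l f s x u) t /\
    ex_derive (fun s => iterd l f t s u) x /\
    ex_derive (fun s => iterd l f t x s) u.

(** Vector fields  tau d_t + xi d_x + eta d_u  on the (t,x,u)-space. *)
Record vfield := VF { v_t : fn3 ; v_x : fn3 ; v_u : fn3 }.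

Definition smooth_vf (Q : vfield) : Prop :=
  smooth3 (v_t Q) /\ smooth3 (v_x Q) /\ smooth3 (v_u Q).

Definition vf_eq (P Q : vfield) : Prop :=
  forall t x u, v_t P t x u = v_t Q t x u /\ v_x P t x u = v_x Q t x u
             /\ v_u P t x u = v_u Q t x u.

Definition vf_add (P Q : vfield) : vfield :=
  VF (fun t x u => v_t P t x u + v_t Q t x u)
     (fun t x u => v_x P t x u + v_x Q t x u)
     (fun t x u => v_u P t x u + v_u Q t x u).

Definition vf_scale (c : R) (P : vfield) : vfield :=
  VF (fun t x u => c * v_t P t x u) (fun t x u => c * v_x P t x u)
     (fun t x u => c * v_u P t x u).

Definition vf_zero : vfield := VF (fun _ _ _ => 0) (fun _ _ _ => 0) (fun _ _ _ => 0).

Definition vf_apply (P : vfield) (f : fn3) : fn3 :=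
  fun t x u => v_t P t x u * d_t f t x u + v_x P t x u * d_x f t x u
               + v_u P t x u * d_u f t x u.

Definition vf_bracket (P Q : vfield) : vfield :=
  VF (fun t x u => vf_apply P (v_t Q) t x u - vf_apply Q (v_t P) t x u)
     (fun t x u => vf_apply P (v_x Q) t x u - vf_apply Q (v_x P) t x u)
     (fun t x u => vf_apply P (v_u Q) t x u - vf_apply Q (v_u P) t x u).

(** ---- Second prolongation (Olver's formula eta^J = D_J(eta - tau u_t - xi u_x)
    + tau u_{J,t} + xi u_{J,x}, written recursively). ---- *)

Definition TD0t (f : fn3) (t x u ut : R) : R := d_t f t x u + ut * d_u f t x u.
Definition TD0x (f : fn3) (t x u ux : R) : R := d_x f t x u + ux * d_u f t x u.

(** Functions on the first jet space, arguments (t, x, u, u_t, u_x). *)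
Definition fn5 := R -> R -> R -> R -> R -> R.

Definition TD1t (F : fn5) (t x u ut ux utt utx uxx : R) : R :=
  Derive (fun s => F s x u ut ux) t + ut * Derive (fun s => F t x s ut ux) u
  + utt * Derive (fun s => F t x u s ux) ut + utx * Derive (fun s => F t x u ut s) ux.
Definition TD1x (F : fn5) (t x u ut ux utt utx uxx : R) : R :=
  Derive (fun s => F t s u ut ux) x + ux * Derive (fun s => F t x s ut ux) u
  + utx * Derive (fun s => F t x u s ux) ut + uxx * Derive (fun s => F t x u ut s) ux.

Definition eta_t (Q : vfield) : fn5 := fun t x u ut ux =>
  TD0t (v_u Q) t x u ut - ut * TD0t (v_t Q) t x u ut - ux * TD0t (v_x Q) t x u ut.
Definition eta_x (Q : vfield) : fn5 := fun t x u ut ux =>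
  TD0x (v_u Q) t x u ux - ut * TD0x (v_t Q) t x u ux - ux * TD0x (v_x Q) t x u ux.

Definition eta_tt (Q : vfield) (t x u ut ux utt utx uxx : R) : R :=
  TD1t (eta_t Q) t x u ut ux utt utx uxx
  - utt * TD0t (v_t Q) t x u ut - utx * TD0t (v_x Q) t x u ut.
Definition eta_tx (Q : vfield) (t x u ut ux utt utx uxx : R) : R :=
  TD1x (eta_t Q) t x u ut ux utt utx uxx
  - utt * TD0x (v_t Q) t x u ux - utx * TD0x (v_x Q) t x u ux.
Definition eta_xx (Q : vfield) (t x u ut ux utt utx uxx : R) : R :=
  TD1x (eta_x Q) t x u ut ux utt utx uxx
  - utx * TD0x (v_t Q) t x u ux - uxx * TD0x (v_x Q) t x u ux.

(** Second-order differential functions Delta(t,x,u,ut,ux,utt,utx,uxx). *)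
Definition fn8 := R -> R -> R -> R -> R -> R -> R -> R -> R.

Definition pr2_apply (Q : vfield) (D : fn8) (t x u ut ux utt utx uxx : R) : R :=
    v_t Q t x u * Derive (fun s => D s x u ut ux utt utx uxx) t
  + v_x Q t x u * Derive (fun s => D t s u ut ux utt utx uxx) x
  + v_u Q t x u * Derive (fun s => D t x s ut ux utt utx uxx) u
  + eta_t Q t x u ut ux * Derive (fun s => D t x u s ux utt utx uxx) ut
  + eta_x Q t x u ut ux * Derive (fun s => D t x u ut s utt utx uxx) ux
  + eta_tt Q t x u ut ux utt utx uxx * Derive (fun s => D t x u ut ux s utx uxx) utt
  + eta_tx Q t x u ut ux utt utx uxx * Derive (fun s => D t x u ut ux utt s uxx) utx
  + eta_xx Q t x u ut ux utt utx uxx * Derive (fun s => D t x u ut ux utt utx s) uxx.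

Definition infinitesimal_symmetry (D : fn8) (Q : vfield) : Prop :=
  forall t x u ut ux utt utx uxx,
    D t x u ut ux utt utx uxx = 0 -> pr2_apply Q D t x u ut ux utt utx uxx = 0.

Definition in_max_Lie_algebra (D : fn8) (Q : vfield) : Prop :=
  smooth_vf Q /\ infinitesimal_symmetry D Q.

Definition DeltaEq : fn8 := fun t x u ut ux utt utx uxx => ut + (ux + uxx) ^ 2.

Definition X1 : vfield := VF (fun _ _ _ => 0) (fun _ _ _ => -1) (fun _ _ _ => 0).
Definition X2 : vfield := VF (fun _ _ _ => 0) (fun _ _ _ => 0) (fun _ x _ => - exp (- x)).
Definition X3 : vfield := VF (fun _ _ _ => 1) (fun _ _ _ => 0) (fun _ _ _ => 0).
Definition X4 : vfield := VF (fun _ _ _ => 0) (fun _ _ _ => 0) (fun _ _ _ => 1).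
Definition X5 : vfield := VF (fun t _ _ => t) (fun _ _ _ => 0) (fun _ _ u => - u).

Definition lincomb5 (c1 c2 c3 c4 c5 : R) : vfield :=
  vf_add (vf_scale c1 X1) (vf_add (vf_scale c2 X2) (vf_add (vf_scale c3 X3)
    (vf_add (vf_scale c4 X4) (vf_scale c5 X5)))).

Definition in_span5 (Q : vfield) : Prop :=
  exists c1 c2 c3 c4 c5 : R, vf_eq Q (lincomb5 c1 c2 c3 c4 c5).

(* Main.v *)
Require Import Defs.
From Stdlib Require Import Reals Lra FunctionalExtensionality List.
From Coquelicot Require Import Coquelicot.
Open Scope R_scope.

Lemma sm_x f l t x u : smooth3 f -> ex_derive (fun s => iterd l f t s u) x.
Proof. intros H; apply (H l t x u). Qed.
Lemma sm_u f l t x u : smooth3 f -> ex_derive (fun s => iterd l f t x s) u.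
Proof. intros H; apply (H l t x u). Qed.
Lemma sm_t f l t x u : smooth3 f -> ex_derive (fun s => iterd l f s x u) t.
Proof. intros H; apply (H l t x u). Qed.

Lemma fold_x (f : fn3) t x u : Derive (fun z => f t z u) x = d_x f t x u.
Proof. reflexivity. Qed.
Lemma fold_u (f : fn3) t x u : Derive (fun z => f t x z) u = d_u f t x u.
Proof. reflexivity. Qed.

Lemma fold_t (f : fn3) t x u : Derive (fun z => f z x u) t = d_t f t x u.
Proof. reflexivity. Qed.

Ltac lbase f := match f with d_x ?g => lbase g | d_u ?g => lbase g | d_t ?g => lbase g | _ => f end.
Ltac lst f := match f with
  | d_x ?g => let l := lst g in constr:(1%nat :: l)
  | d_u ?g => let l := lst g in constr:(2%nat :: l)
  | d_t ?g => let l := lst g in constr:(0%nat :: l)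
  | _ => constr:(@nil nat) end.
Ltac smo := match goal with
 | |- ex_derive (fun z => ?F ?t z ?u) ?x =>
     let l := lst F in let b := lbase F in exact (sm_x b l t x u ltac:(assumption))
 | |- ex_derive (fun z => ?F ?t ?x z) ?u =>
     let l := lst F in let b := lbase F in exact (sm_u b l t x u ltac:(assumption))
 | |- ex_derive (fun z => ?F z ?x ?u) ?t =>
     let l := lst F in let b := lbase F in exact (sm_t b l t x u ltac:(assumption))
 end.

Definition EXX (Q : vfield) t x u p q s r :=
  let ta := v_t Q in let xi := v_x Q in let et := v_u Q in
  (d_x (d_x et) t x u + q * d_x (d_u et) t x u
     - p * (d_x (d_x ta) t x u + q * d_x (d_u ta) t x u)
     - q * (d_x (d_x xi) t x u + q * d_x (d_u xi) t x u))
 + q * (d_u (d_x et) t x u + q * d_u (d_u et) t x u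
     - p * (d_u (d_x ta) t x u + q * d_u (d_u ta) t x u)
     - q * (d_u (d_x xi) t x u + q * d_u (d_u xi) t x u))
 + s * (- (d_x ta t x u + q * d_u ta t x u))
 + r * (d_u et t x u - p * d_u ta t x u - (d_x xi t x u + 2 * q * d_u xi t x u))
 - s * (d_x ta t x u + q * d_u ta t x u) - r * (d_x xi t x u + q * d_u xi t x u).

Lemma pr2_formula Q t x u p q w s r : smooth_vf Q ->
  pr2_apply Q DeltaEq t x u p q w s r =
  eta_t Q t x u p q + 2 * (q + r) * (eta_x Q t x u p q + EXX Q t x u p q s r).
Proof.
  intros [Ht [Hx Hu]].
  unfold pr2_apply, DeltaEq.
  assert (E0: forall z, Derive (fun _ : R => p + (q + r) ^ 2) z = 0) by (intro; apply Derive_const).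
  rewrite !E0.
  assert (E1 : Derive (fun s0 => s0 + (q + r) ^ 2) p = 1).
  { apply is_derive_unique; auto_derive; auto; ring. }
  assert (E2 : Derive (fun s0 => p + (s0 + r) ^ 2) q = 2 * (q + r)).
  { apply is_derive_unique; auto_derive; auto; ring. }
  assert (E3 : Derive (fun s0 => p + (q + s0) ^ 2) r = 2 * (q + r)).
  { apply is_derive_unique; auto_derive; auto; ring. }
  rewrite E1, E2, E3.
  unfold eta_xx, TD1x.
  assert (D1 : Derive (fun z => eta_x Q t z u p q) x =
     d_x (d_x (v_u Q)) t x u + q * d_x (d_u (v_u Q)) t x u
     - p * (d_x (d_x (v_t Q)) t x u + q * d_x (d_u (v_t Q)) t x u)
     - q * (d_x (d_x (v_x Q)) t x u + q * d_x (d_u (v_x Q)) t x u)).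
  { apply is_derive_unique. unfold eta_x, TD0x.
    auto_derive.
    - repeat split; smo.
    - rewrite ?fold_x, ?fold_u. ring. }
  assert (D2 : Derive (fun z => eta_x Q t x z p q) u =
     d_u (d_x (v_u Q)) t x u + q * d_u (d_u (v_u Q)) t x u
     - p * (d_u (d_x (v_t Q)) t x u + q * d_u (d_u (v_t Q)) t x u)
     - q * (d_u (d_x (v_x Q)) t x u + q * d_u (d_u (v_x Q)) t x u)).
  { apply is_derive_unique. unfold eta_x, TD0x.
    auto_derive.
    - repeat split; smo.
    - rewrite ?fold_x, ?fold_u. ring. }
  assert (D3 : Derive (fun z => eta_x Q t x u z q) p = - (d_x (v_t Q) t x u + q * d_u (v_t Q) t x u)).
  { apply is_derive_unique. unfold eta_x, TD0x. auto_derive; auto. ring. }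
  assert (D4 : Derive (fun z => eta_x Q t x u p z) q =
     d_u (v_u Q) t x u - p * d_u (v_t Q) t x u - (d_x (v_x Q) t x u + 2 * q * d_u (v_x Q) t x u)).
  { apply is_derive_unique. unfold eta_x, TD0x. auto_derive; auto. ring. }
  rewrite D1, D2, D3, D4. unfold EXX. unfold TD0x. ring.
Qed.

Lemma cond Q : in_max_Lie_algebra DeltaEq Q -> forall t x u q r s,
  eta_t Q t x u (-(q+r)^2) q + 2 * (q + r) *
   (eta_x Q t x u (-(q+r)^2) q + EXX Q t x u (-(q+r)^2) q s r) = 0.
Proof.
  intros [HS HI] t x u q r s.
  rewrite <- (pr2_formula Q t x u _ q 0 s r HS). apply HI. unfold DeltaEq. ring.
Qed.

Lemma stage1 Q : in_max_Lie_algebra DeltaEq Q ->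
  (forall t x u, d_x (v_t Q) t x u = 0) /\ (forall t x u, d_u (v_t Q) t x u = 0).
Proof.
  intros H.
  assert (K : forall t x u q r,
    (eta_t Q t x u (-(q+r)^2) q + 2 * (q + r) *
      (eta_x Q t x u (-(q+r)^2) q + EXX Q t x u (-(q+r)^2) q 1 r))
  - (eta_t Q t x u (-(q+r)^2) q + 2 * (q + r) *
      (eta_x Q t x u (-(q+r)^2) q + EXX Q t x u (-(q+r)^2) q 0 r))
  = -4 * (q + r) * (d_x (v_t Q) t x u + q * d_u (v_t Q) t x u)).
  { intros. unfold EXX. ring. }
  assert (A : forall t x u q r, (q + r) * (d_x (v_t Q) t x u + q * d_u (v_t Q) t x u) = 0).
  { intros t x u q r. pose proof (K t x u q r) as K'. rewrite !(cond Q H) in K'. lra. }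
  split; intros t x u.
  - pose proof (A t x u 0 1). lra.
  - pose proof (A t x u 0 1). pose proof (A t x u 1 0). lra.
Qed.

Lemma zero_dx (f : fn3) : (forall t x u, f t x u = 0) -> forall t x u, d_x f t x u = 0.
Proof. intros H t x u. unfold d_x. rewrite (Derive_ext _ (fun _ => 0)) by (intro; apply H). apply Derive_const. Qed.
Lemma zero_du (f : fn3) : (forall t x u, f t x u = 0) -> forall t x u, d_u f t x u = 0.
Proof. intros H t x u. unfold d_u. rewrite (Derive_ext _ (fun _ => 0)) by (intro; apply H). apply Derive_const. Qed.
Lemma zero_dt (f : fn3) : (forall t x u, f t x u = 0) -> forall t x u, d_t f t x u = 0.
Proof. intros H t x u. unfold d_t. rewrite (Derive_ext _ (fun _ => 0)) by (intro; apply H). apply Derive_const. Qed.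

Lemma extract c0 c1 a b c d e f :
  (forall m q, c0 + c1*q + m*(a + b*q + c*q^2 + d*q^3) + m^2*(e + f*q) = 0) ->
  c0 = 0 /\ c1 = 0 /\ a = 0 /\ b = 0 /\ e = 0 /\ f = 0.
Proof.
  intros H.
  pose proof (H 0 0). pose proof (H 0 1). pose proof (H 1 0). pose proof (H 1 1).
  pose proof (H 1 (-1)). pose proof (H 1 2). pose proof (H (-1) 0). pose proof (H (-1) 1).
  pose proof (H (-1) (-1)). pose proof (H (-1) 2).
  repeat split; lra.
Qed.

Lemma stage2 Q : in_max_Lie_algebra DeltaEq Q ->
  let ta := v_t Q in let xi := v_x Q in let et := v_u Q in
  forall t x u,
  d_t et t x u = 0 /\ - d_t xi t x u = 0 /\
  2 * (d_x et t x u + d_x (d_x et) t x u) = 0 /\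
  2 * (d_x xi t x u + d_u (d_x et) t x u + d_x (d_u et) t x u - d_x (d_x xi) t x u) = 0 /\
  d_u et t x u + d_t ta t x u - 4 * d_x xi t x u = 0 /\
  -5 * d_u xi t x u = 0.
Proof.
  intros H ta xi et t x u.
  destruct (stage1 Q H) as [H1 H2].
  pose proof (zero_dx _ H1) as H3. pose proof (zero_du _ H1) as H4.
  pose proof (zero_dx _ H2) as H5. pose proof (zero_du _ H2) as H6.
  apply (extract _ _ _ _
    (2 * (d_u (d_u et) t x u - d_u (d_x xi) t x u - d_x (d_u xi) t x u + 2 * d_u xi t x u))
    (-2 * d_u (d_u xi) t x u)).
  intros m q.
  rewrite <- (cond Q H t x u q (m - q) 0).
  unfold eta_t, eta_x, EXX, TD0t, TD0x.
  subst ta xi et.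
  rewrite H1, H2, H3, H4, H5, H6.
  replace (q + (m - q)) with m by ring. ring.
Qed.

Lemma const_fun (g : R -> R) : (forall z, is_derive g z 0) -> forall a b, g a = g b.
Proof.
  intros H a b. destruct (Rtotal_order a b) as [h|[h|h]].
  - apply eq_is_derive; auto.
  - subst; auto.
  - symmetry; apply eq_is_derive; auto.
Qed.

Lemma der0_const (g : R -> R) : (forall z, ex_derive g z) -> (forall z, Derive g z = 0) ->
  forall a b, g a = g b.
Proof.
  intros H1 H2. apply const_fun. intro z. rewrite <- (H2 z). apply Derive_correct; auto.
Qed.

Lemma lin_sub (h : R -> R) k : (forall z, ex_derive h z) -> (forall z, Derive h z = k) ->
  forall z, h z = h 0 + k * z.
Proof.
  intros H1 H2 z.
  assert (E : (fun s => h s - k * s) z = (fun s => h s - k * s) 0).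
  { apply (const_fun (fun s => h s - k * s)). intro y. auto_derive. apply H1. rewrite H2. ring. }
  simpl in E. lra.
Qed.

Lemma indep_t f : smooth3 f -> (forall t x u, d_t f t x u = 0) -> forall t x u, f t x u = f 0 x u.
Proof. intros Hs H t x u. apply (der0_const (fun s => f s x u)); [intro; smo | intro; apply H]. Qed.
Lemma indep_x f : smooth3 f -> (forall t x u, d_x f t x u = 0) -> forall t x u, f t x u = f t 0 u.
Proof. intros Hs H t x u. apply (der0_const (fun s => f t s u)); [intro; smo | intro; apply H]. Qed.
Lemma indep_u f : smooth3 f -> (forall t x u, d_u f t x u = 0) -> forall t x u, f t x u = f t x 0.
Proof. intros Hs H t x u. apply (der0_const (fun s => f t x s)); [intro; smo | intro; apply H]. Qed.

Lemma forward Q : in_max_Lie_algebra DeltaEq Q -> in_span5 Q.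
Proof.
  intros H. pose proof (stage1 Q H) as [Ftx Ftu]. pose proof (stage2 Q H) as S2.
  cbv zeta in S2.
  assert (Fet : forall t x u, d_t (v_u Q) t x u = 0) by (intros t x u; apply (S2 t x u)).
  assert (Fxt : forall t x u, d_t (v_x Q) t x u = 0) by (intros t x u; pose proof (proj1 (proj2 (S2 t x u))); lra).
  assert (F7 : forall t x u, d_x (v_u Q) t x u + d_x (d_x (v_u Q)) t x u = 0)
    by (intros t x u; pose proof (proj1 (proj2 (proj2 (S2 t x u)))); lra).
  assert (F8 : forall t x u, d_x (v_x Q) t x u + d_u (d_x (v_u Q)) t x u + d_x (d_u (v_u Q)) t x u
     - d_x (d_x (v_x Q)) t x u = 0)
    by (intros t x u; pose proof (proj1 (proj2 (proj2 (proj2 (S2 t x u))))); lra).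
  assert (F6 : forall t x u, d_u (v_u Q) t x u + d_t (v_t Q) t x u - 4 * d_x (v_x Q) t x u = 0)
    by (intros t x u; apply (S2 t x u)).
  assert (Fxu : forall t x u, d_u (v_x Q) t x u = 0)
    by (intros t x u; pose proof (proj2 (proj2 (proj2 (proj2 (proj2 (S2 t x u)))))); lra).
  clear S2. destruct H as [[Hta [Hxi Het]] _].
  destruct Q as [ta xi et]. cbn [v_t v_x v_u] in *.
  assert (T1 : forall t x u, ta t x u = ta t 0 0).
  { intros. rewrite (indep_x ta Hta Ftx t x u). apply (indep_u ta Hta Ftu). }
  assert (XX2 : forall t x u, xi t x u = xi 0 x 0).
  { intros. rewrite (indep_t xi Hxi Fxt t x u). apply (indep_u xi Hxi Fxu). }
  assert (E3 : forall t x u, et t x u = et 0 x u) by (intros; apply (indep_t et Het Fet)).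
  assert (D4 : forall t x u, d_t ta t x u = Derive (fun s => ta s 0 0) t).
  { intros. unfold d_t. apply Derive_ext. intro; apply T1. }
  assert (D5 : forall t x u, d_x xi t x u = d_x xi 0 x 0).
  { intros. unfold d_x. apply Derive_ext. intro; apply XX2. }
  assert (D5b : forall t x u, d_x (d_x xi) t x u = d_x (d_x xi) 0 x 0).
  { intros. change (Derive (fun s => d_x xi t s u) x = Derive (fun s => d_x xi 0 s 0) x).
    apply Derive_ext. intro; apply D5. }
  assert (D6 : forall t x u, d_u et t x u = d_u et 0 x u).
  { intros. change (Derive (fun s => et t x s) u = Derive (fun s => et 0 x s) u).
    apply Derive_ext. intro; apply E3. }
  pose (k := Derive (fun s => ta s 0 0) 0).
  assert (K7 : forall t, Derive (fun s => ta s 0 0) t = k).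
  { intros t. pose proof (F6 t 0 0) as H0. pose proof (F6 0 0 0) as H1.
    rewrite D4, D6, D5 in H0. rewrite D4 in H1. unfold k. lra. }
  assert (T8 : forall t, ta t 0 0 = ta 0 0 0 + k * t).
  { apply (lin_sub (fun s => ta s 0 0) k); [intro; smo | exact K7]. }
  assert (A9 : forall t x u, d_u et t x u = 4 * d_x xi 0 x 0 - k).
  { intros. pose proof (F6 t x u) as H0. rewrite D4, K7, D5 in H0. lra. }
  assert (E10 : forall t x u, et t x u = et 0 x 0 + (4 * d_x xi 0 x 0 - k) * u).
  { intros. rewrite E3. apply (lin_sub (fun s => et 0 x s)); [intro; smo | intro z; apply (A9 0 x z)]. }
  assert (D11 : forall t x u, d_x et t x u = d_x et 0 x 0 + 4 * d_x (d_x xi) 0 x 0 * u).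
  { intros. change (Derive (fun z => et t z u) x = d_x et 0 x 0 + 4 * d_x (d_x xi) 0 x 0 * u).
    rewrite (Derive_ext _ (fun z => et 0 z 0 + (4 * d_x xi 0 z 0 - k) * u)) by (intro; apply E10).
    apply is_derive_unique. auto_derive. repeat split; try smo. rewrite ?fold_x. ring. }
  assert (D12 : forall t x u, d_u (d_x et) t x u = 4 * d_x (d_x xi) 0 x 0).
  { intros. change (Derive (fun z => d_x et t x z) u = 4 * d_x (d_x xi) 0 x 0).
    rewrite (Derive_ext _ (fun z => d_x et 0 x 0 + 4 * d_x (d_x xi) 0 x 0 * z)) by (intro; apply D11).
    apply is_derive_unique. auto_derive; auto. ring. }
  assert (D13 : forall t x u, d_x (d_x et) t x u = d_x (d_x et) 0 x 0 + 4 * d_x (d_x (d_x xi)) 0 x 0 * u).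
  { intros. change (Derive (fun z => d_x et t z u) x = d_x (d_x et) 0 x 0 + 4 * d_x (d_x (d_x xi)) 0 x 0 * u).
    rewrite (Derive_ext _ (fun z => d_x et 0 z 0 + 4 * d_x (d_x xi) 0 z 0 * u)) by (intro; apply D11).
    apply is_derive_unique. auto_derive. repeat split; try smo. rewrite ?fold_x. ring. }
  assert (D14 : forall t x u, d_x (d_u et) t x u = 4 * d_x (d_x xi) 0 x 0).
  { intros. change (Derive (fun z => d_u et t z u) x = 4 * d_x (d_x xi) 0 x 0).
    rewrite (Derive_ext _ (fun z => 4 * d_x xi 0 z 0 - k)) by (intro; apply A9).
    apply is_derive_unique. auto_derive. repeat split; try smo. rewrite ?fold_x. ring. }
  assert (R1 : forall x, d_x xi 0 x 0 + 7 * d_x (d_x xi) 0 x 0 = 0).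
  { intros x. pose proof (F8 0 x 0) as H0. rewrite D12, D14 in H0. lra. }
  assert (R2 : forall x, d_x (d_x xi) 0 x 0 + d_x (d_x (d_x xi)) 0 x 0 = 0).
  { intros x. pose proof (F7 0 x 0) as H0. pose proof (F7 0 x 1) as H1.
    rewrite D11, D13 in H0, H1. lra. }
  assert (B17 : forall x, d_x (d_x et) 0 x 0 = - d_x et 0 x 0).
  { intros x. pose proof (F7 0 x 0) as H0. rewrite D11, D13 in H0. lra. }
  assert (R3 : forall x, d_x (d_x xi) 0 x 0 + 7 * d_x (d_x (d_x xi)) 0 x 0 = 0).
  { intro x. transitivity (Derive (fun z => d_x xi 0 z 0 + 7 * d_x (d_x xi) 0 z 0) x).
    - symmetry. apply is_derive_unique. auto_derive. repeat split; try smo. rewrite ?fold_x. ring.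
    - rewrite (Derive_ext _ (fun _ => 0)) by (intro; apply R1). apply Derive_const. }
  assert (Xi1 : forall x, d_x xi 0 x 0 = 0).
  { intros x. pose proof (R1 x). pose proof (R2 x). pose proof (R3 x). lra. }
  assert (X16 : forall t x u, xi t x u = xi 0 0 0).
  { intros. rewrite XX2. apply (der0_const (fun z => xi 0 z 0)); [intro; smo | intro; apply Xi1]. }
  pose (C := d_x et 0 0 0).
  assert (B18 : forall x, exp x * d_x et 0 x 0 = C).
  { intro x. transitivity ((fun z => exp z * d_x et 0 z 0) 0).
    - apply (der0_const (fun z => exp z * d_x et 0 z 0)).
      + intro z. auto_derive. smo.
      + intro z. apply is_derive_unique. auto_derive. smo. rewrite ?fold_x. rewrite B17. ring.
    - cbv beta. rewrite exp_0. unfold C. ring. }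
  assert (B19 : forall x, et 0 x 0 = et 0 0 0 + C - C * exp (- x)).
  { intro x.
    assert (G : (fun z => et 0 z 0 + C * exp (- z)) x = (fun z => et 0 z 0 + C * exp (- z)) 0).
    { apply (der0_const (fun z => et 0 z 0 + C * exp (- z))).
      + intro z. auto_derive. smo.
      + intro z. apply is_derive_unique. auto_derive. smo. rewrite ?fold_x.
        rewrite <- (B18 z). rewrite exp_Ropp. field. apply Rgt_not_eq, exp_pos. }
    cbv beta in G. rewrite Ropp_0, exp_0 in G. lra. }
  exists (- xi 0 0 0), C, (ta 0 0 0), (et 0 0 0 + C), k.
  intros t x u. unfold lincomb5, vf_add, vf_scale, X1, X2, X3, X4, X5. cbn [v_t v_x v_u].
  split; [| split].
  - rewrite T1, T8. ring.
  - rewrite X16. ring.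
  - rewrite E10, Xi1, B19. ring.
Qed.

Definition Pf (f : fn3) a b c d := forall t x u, f t x u = a + b * t + c * exp (- x) + d * u.

Lemma Pf_is (f : fn3) a b c d : Pf f a b c d -> forall t x u,
  is_derive (fun s => f s x u) t b /\ is_derive (fun s => f t s u) x (- c * exp (- x)) /\
  is_derive (fun s => f t x s) u d.
Proof.
  intros H t x u. split; [|split].
  - apply is_derive_ext with (f := fun s => a + b * s + c * exp (- x) + d * u). intro; symmetry; apply H.
    auto_derive; auto; ring.
  - apply is_derive_ext with (f := fun s => a + b * t + c * exp (- s) + d * u). intro; symmetry; apply H.
    auto_derive; auto; ring.
  - apply is_derive_ext with (f := fun s => a + b * t + c * exp (- x) + d * s). intro; symmetry; apply H.
    auto_derive; auto; ring.
Qed.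

Lemma Pf_dt f a b c d : Pf f a b c d -> Pf (d_t f) b 0 0 0.
Proof. intros H t x u. unfold d_t. replace (b + 0 * t + 0 * exp (- x) + 0 * u) with b by ring. apply is_derive_unique, (proj1 (Pf_is f a b c d H t x u)). Qed.
Lemma Pf_dx f a b c d : Pf f a b c d -> Pf (d_x f) 0 0 (- c) 0.
Proof. intros H t x u. unfold d_x. replace (0 + 0 * t + - c * exp (- x) + 0 * u) with (- c * exp (- x)) by ring. apply is_derive_unique, (proj1 (proj2 (Pf_is f a b c d H t x u))). Qed.
Lemma Pf_du f a b c d : Pf f a b c d -> Pf (d_u f) d 0 0 0.
Proof. intros H t x u. unfold d_u. replace (d + 0 * t + 0 * exp (- x) + 0 * u) with d by ring. apply is_derive_unique, (proj2 (proj2 (Pf_is f a b c d H t x u))). Qed.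

Lemma Pf_iter f a b c d : Pf f a b c d -> forall l, exists a b c d, Pf (iterd l f) a b c d.
Proof.
  intros H l. induction l as [|i l IH].
  - exists a, b, c, d. exact H.
  - destruct IH as (a'&b'&c'&d'&H'). destruct i as [|[|i]]; simpl.
    + eexists _, _, _, _. apply (Pf_dt _ _ _ _ _ H').
    + eexists _, _, _, _. apply (Pf_dx _ _ _ _ _ H').
    + eexists _, _, _, _. apply (Pf_du _ _ _ _ _ H').
Qed.

Lemma cont_P a b c d (p : R * R * R) :
  continuous (fun p : R * R * R => a + b * fst (fst p) + c * exp (- snd (fst p)) + d * snd p) p.
Proof.
  destruct p as [[t x] u].
  assert (Cf : continuous (fun p : R * R * R => fst (fst p)) (t, x, u)).
  { apply (continuous_comp fst fst). apply continuous_fst. apply continuous_fst. }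
  assert (Cs : continuous (fun p : R * R * R => snd (fst p)) (t, x, u)).
  { apply (continuous_comp fst snd). apply continuous_fst. apply continuous_snd. }
  assert (Cu : continuous (fun p : R * R * R => snd p) (t, x, u)) by apply continuous_snd.
  assert (Ce : continuous (fun p : R * R * R => exp (- snd (fst p))) (t, x, u)).
  { apply (continuous_comp (fun p : R * R * R => snd (fst p)) (fun y => exp (- y))). exact Cs.
    simpl. apply (@ex_derive_continuous R_AbsRing R_NormedModule (fun y => exp (- y))). auto_derive. auto. }
  apply (continuous_plus (fun p : R * R * R => a + b * fst (fst p) + c * exp (- snd (fst p)))
                         (fun p : R * R * R => d * snd p)).
  apply (continuous_plus (fun p : R * R * R => a + b * fst (fst p))
                         (fun p : R * R * R => c * exp (- snd (fst p)))).
  apply (continuous_plus (fun p : R * R * R => a) (fun p : R * R * R => b * fst (fst p))).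
  apply continuous_const.
  apply (continuous_mult (fun p : R * R * R => b) (fun p : R * R * R => fst (fst p))). apply continuous_const. exact Cf.
  apply (continuous_mult (fun p : R * R * R => c) (fun p : R * R * R => exp (- snd (fst p)))). apply continuous_const. exact Ce.
  apply (continuous_mult (fun p : R * R * R => d) (fun p : R * R * R => snd p)). apply continuous_const. exact Cu.
Qed.

Lemma Pf_smooth f a b c d : Pf f a b c d -> smooth3 f.
Proof.
  intros H l t x u. destruct (Pf_iter f a b c d H l) as (a'&b'&c'&d'&H').
  destruct (Pf_is _ _ _ _ _ H' t x u) as (I1&I2&I3).
  split; [| split; [eexists; exact I1 | split; eexists; eassumption]].
  apply (continuous_ext (fun p : R * R * R => a' + b' * fst (fst p) + c' * exp (- snd (fst p)) + d' * snd p)).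
  - intros p. unfold unc3. symmetry. apply H'.
  - apply cont_P.
Qed.

Ltac genP H :=
  let a := fresh "P" in let b := fresh "P" in let c := fresh "P" in
  pose proof (Pf_dt _ _ _ _ _ H) as a; pose proof (Pf_dx _ _ _ _ _ H) as b;
  pose proof (Pf_du _ _ _ _ _ H) as c.
Ltac genP2 H :=
  let a := fresh "P" in let b := fresh "P" in let c := fresh "P" in
  let b1 := fresh "P" in let b2 := fresh "P" in let c1 := fresh "P" in let c2 := fresh "P" in
  pose proof (Pf_dt _ _ _ _ _ H) as a; pose proof (Pf_dx _ _ _ _ _ H) as b;
  pose proof (Pf_du _ _ _ _ _ H) as c;
  pose proof (Pf_dx _ _ _ _ _ b) as b1; pose proof (Pf_du _ _ _ _ _ b) as b2;
  pose proof (Pf_dx _ _ _ _ _ c) as c1; pose proof (Pf_du _ _ _ _ _ c) as c2.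
Ltac rwP := repeat match goal with
  | H : forall t x u : R, ?f t x u = _ |- context [?f ?a ?b ?c] => rewrite (H a b c) end.

Lemma backward Q : in_span5 Q -> in_max_Lie_algebra DeltaEq Q.
Proof.
  intros (c1&c2&c3&c4&c5&HE).
  assert (Pt : Pf (v_t Q) c3 c5 0 0).
  { intros t x u. rewrite (proj1 (HE t x u)). unfold lincomb5, vf_add, vf_scale, X1, X2, X3, X4, X5.
    cbn [v_t v_x v_u]. ring. }
  assert (Px : Pf (v_x Q) (- c1) 0 0 0).
  { intros t x u. rewrite (proj1 (proj2 (HE t x u))). unfold lincomb5, vf_add, vf_scale, X1, X2, X3, X4, X5.
    cbn [v_t v_x v_u]. ring. }
  assert (Pu : Pf (v_u Q) c4 0 (- c2) (- c5)).
  { intros t x u. rewrite (proj2 (proj2 (HE t x u))). unfold lincomb5, vf_add, vf_scale, X1, X2, X3, X4, X5.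
    cbn [v_t v_x v_u]. ring. }
  assert (HS : smooth_vf Q).
  { split; [|split]; eapply Pf_smooth; eassumption. }
  split; [exact HS|].
  intros t x u p q w s r HD.
  rewrite pr2_formula by exact HS.
  unfold eta_t, eta_x, EXX, TD0t, TD0x.
  genP2 Pt. genP2 Px. genP2 Pu. clear HE. unfold Pf in *. rwP.
  unfold DeltaEq in HD. assert (Hp : p = - (q + r) ^ 2) by lra. subst p. ring.
Qed.

Lemma indep c1 c2 c3 c4 c5 : vf_eq (lincomb5 c1 c2 c3 c4 c5) vf_zero ->
     c1 = 0 /\ c2 = 0 /\ c3 = 0 /\ c4 = 0 /\ c5 = 0.
Proof.
  intros H. unfold vf_eq, lincomb5, vf_add, vf_scale, vf_zero, X1, X2, X3, X4, X5 in H.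
  cbn [v_t v_x v_u] in H.
  destruct (H 0 0 0) as (A1&A2&A3). destruct (H 1 1 0) as (B1&B2&B3).
  rewrite Ropp_0, exp_0 in A3.
  assert (He : exp (Ropp 1) < 1) by (pose proof (exp_increasing (Ropp 1) 0 ltac:(lra)) as E; rewrite exp_0 in E; exact E).
  assert (Hc5 : c5 = 0) by lra.
  assert (Hc3 : c3 = 0) by lra.
  assert (Hc1 : c1 = 0) by lra.
  assert (Hc2 : c2 * (1 - exp (Ropp 1)) = 0) by lra.
  assert (Hc2' : c2 = 0).
  { destruct (Rmult_integral _ _ Hc2) as [h|h]; [exact h | lra]. }
  repeat split; lra.
Qed.

Lemma PX1t : Pf (v_t X1) 0 0 0 0. Proof. intros t x u; cbn; ring. Qed.
Lemma PX1x : Pf (v_x X1) (-1) 0 0 0. Proof. intros t x u; cbn; ring. Qed.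
Lemma PX1u : Pf (v_u X1) 0 0 0 0. Proof. intros t x u; cbn; ring. Qed.
Lemma PX2t : Pf (v_t X2) 0 0 0 0. Proof. intros t x u; cbn; ring. Qed.
Lemma PX2x : Pf (v_x X2) 0 0 0 0. Proof. intros t x u; cbn; ring. Qed.
Lemma PX2u : Pf (v_u X2) 0 0 (-1) 0. Proof. intros t x u; cbn; ring. Qed.
Lemma PX3t : Pf (v_t X3) 1 0 0 0. Proof. intros t x u; cbn; ring. Qed.
Lemma PX3x : Pf (v_x X3) 0 0 0 0. Proof. intros t x u; cbn; ring. Qed.
Lemma PX3u : Pf (v_u X3) 0 0 0 0. Proof. intros t x u; cbn; ring. Qed.
Lemma PX4t : Pf (v_t X4) 0 0 0 0. Proof. intros t x u; cbn; ring. Qed.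
Lemma PX4x : Pf (v_x X4) 0 0 0 0. Proof. intros t x u; cbn; ring. Qed.
Lemma PX4u : Pf (v_u X4) 1 0 0 0. Proof. intros t x u; cbn; ring. Qed.
Lemma PX5t : Pf (v_t X5) 0 1 0 0. Proof. intros t x u; cbn; ring. Qed.
Lemma PX5x : Pf (v_x X5) 0 0 0 0. Proof. intros t x u; cbn; ring. Qed.
Lemma PX5u : Pf (v_u X5) 0 0 0 (-1). Proof. intros t x u; cbn; ring. Qed.

Ltac brk :=
  unfold vf_eq, vf_bracket, vf_apply; intros t0 x0 u0;
  pose proof PX1t as Q1; pose proof PX1x as Q2; pose proof PX1u as Q3;
  pose proof PX2t as Q4; pose proof PX2x as Q5; pose proof PX2u as Q6;
  pose proof PX3t as Q7; pose proof PX3x as Q8; pose proof PX3u as Q9;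
  pose proof PX4t as Q10; pose proof PX4x as Q11; pose proof PX4u as Q12;
  pose proof PX5t as Q13; pose proof PX5x as Q14; pose proof PX5u as Q15;
  genP Q1; genP Q2; genP Q3; genP Q4; genP Q5; genP Q6; genP Q7; genP Q8; genP Q9;
  genP Q10; genP Q11; genP Q12; genP Q13; genP Q14; genP Q15;
  unfold vf_zero, vf_scale; cbn [v_t v_x v_u];
  unfold Pf in *; rwP; repeat split; ring.

Theorem mainTheorem2 :
  (forall Q : vfield, in_max_Lie_algebra DeltaEq Q <-> in_span5 Q) /\
  (forall c1 c2 c3 c4 c5 : R, vf_eq (lincomb5 c1 c2 c3 c4 c5) vf_zero ->
     c1 = 0 /\ c2 = 0 /\ c3 = 0 /\ c4 = 0 /\ c5 = 0) /\
  vf_eq (vf_bracket X1 X2) X2 /\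
  vf_eq (vf_bracket X1 X3) vf_zero /\
  vf_eq (vf_bracket X1 X4) vf_zero /\
  vf_eq (vf_bracket X1 X5) vf_zero /\
  vf_eq (vf_bracket X2 X3) vf_zero /\
  vf_eq (vf_bracket X2 X4) vf_zero /\
  vf_eq (vf_bracket X2 X5) (vf_scale (-1) X2) /\
  vf_eq (vf_bracket X3 X4) vf_zero /\
  vf_eq (vf_bracket X3 X5) X3 /\
  vf_eq (vf_bracket X4 X5) (vf_scale (-1) X4).
Proof.
  split; [intro Q; split; [apply forward | apply backward] |].
  split; [exact indep |].
  repeat match goal with |- _ /\ _ => split end; brk.
Qed.
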